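(* Let $c<d$ be real numbers and suppose $\omega$ is nonnegative and nondecreasing on $(c,d]$. Let $K\ge1$ be an integer and $c_1,\dots,c_K\in\mathbb{R}$. For $\rho>0$ let $$E_\rho=\Big\{t\in(c,d]:\ \omega(t)^{K-1}\,\omega(d)\prod_{\ell=1}^K|t-c_\ell|\le\rho^K\Big\}.$$ Then $$\int_{E_\rho}\omega(t)\,dt\le C(K)\,\rho,$$ where $C(K)$ depends only on $K$. *)

(* Defs.v *)
From mathcomp Require Import all_boot all_order all_algebra.
From mathcomp Require Import all_classical all_reals all_analysis.
Set Implicit Arguments. Unset Strict Implicit. Unset Printing Implicit Defensive.
Import Order.TTheory GRing.Theory Num.Theory.
Local Open Scope classical_set_scope.
Local Open Scope ring_scope.

Definition Eset (R : realType) (c d : R) (w : R -> R) (K : nat)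
    (cs : 'I_K -> R) (rho : R) : set R :=
  [set t | c < t /\ t <= d /\
     w t ^+ (K.-1) * w d * \prod_(l < K) `|t - cs l| <= rho ^+ K].

(* Main.v *)
From mathcomp Require Import all_boot all_order all_algebra.
From mathcomp Require Import all_classical all_reals all_analysis.
From mathcomp Require Import ring lra measurable_realfun.
Require Import Defs.
Import Order.TTheory GRing.Theory Num.Theory.
Import numFieldNormedType.Exports.
Local Open Scope classical_set_scope.
Local Open Scope ring_scope.
Lemma disc (P : nat -> Prop) N : P 0%N -> ~ P N -> exists j, P j /\ ~ P j.+1.
Proof.
move=> P0; elim: N => [//|N IH] PN.
case: (pselect (P N)) => [h|h]; first by exists N.
exact: IH.
Qed.
Lemma level (R : realType) (k : nat) (M x : R) : 0 < x -> x <= M ->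
  exists j : nat, M / (2^+j.+1)^+k.+1 < x /\ x <= M / (2^+j)^+k.+1.
Proof.
move=> x0 xM.
have M0 : 0 < M by apply: lt_le_trans xM.
pose N := (Num.truncn (M / x)).+1.
have HN : M / x < N%:R by rewrite truncnS_gt.
have := @disc (fun j => x <= M / (2^+j)^+k.+1) N.
case.
- by rewrite expr0 expr1n divr1.
- apply/negP; rewrite -ltNge -exprM -natrX ltr_pdivrMr ?ltr0n ?expn_gt0// mulrC -ltr_pdivrMr//.
  apply: (lt_le_trans HN); rewrite ler_nat.
  apply: (leq_trans _ (ltnW (ltn_expl _ (isT : 1 < 2)%N))).
  by rewrite leq_pmulr.
- move=> j [h1 h2]; exists j; split => //; rewrite ltNge; exact/negP.
Qed.
Local Open Scope ereal_scope.
Lemma le_int_nomeas (R: realType) (D1 D2 : set R) (f g : R -> \bar R) :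
 (forall x, D1 x -> 0 <= f x) -> (forall x, D2 x -> 0 <= g x) ->
 (forall x, D1 x -> f x <= (g \_ D2) x) ->
 \int[@lebesgue_measure R]_(x in D1) f x <= \int[lebesgue_measure]_(x in D2) g x.
Proof.
move=> f0 g0 fg; rewrite !ge0_integralE//=.
apply: ereal_sup_le => _ [h hf <-]; exists h => // x.
apply: (le_trans (hf x)); rewrite /patch; case: ifPn => [|_]; last first.
  by case: ifPn => // /[!inE] /g0.
by rewrite inE => /fg.
Qed.
Local Close Scope ereal_scope.

Lemma keyalg (R : realType) (k j : nat) (M rho : R) : 0 < M ->
  (M / (2^+j.+1)^+k.+1)^+k * M * (2 * (rho / M * (2^+j.+1)^+k))^+k.+1
  = 2^+k.+1 * rho^+k.+1.
Proof.
move=> M0; set v : R := 2^+j.+1.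
have v0 : v != 0 by rewrite expf_neq0.
rewrite expr_div_n !exprMn -!exprM (mulnC k.+1 k) exprSr ?exprVn.
set X := (2:R) ^+ (_ * _); have X0 : X != 0 by rewrite expf_neq0.
rewrite exprSr.
have M0' : M != 0 by rewrite gt_eqF.
have Mk0 : M ^+ k != 0 by rewrite expf_neq0.
rewrite (exprSr M).
field; by rewrite M0' Mk0 X0.
Qed.

Lemma termalg (R : realType) (k j : nat) (M rho : R) : 0 < M ->
  k.+1%:R * (M / (2^+j)^+k.+1 * ((2 * (rho / M * (2^+j.+1)^+k)) *+ 2))
  = k.+1%:R * 2^+k.+3 * rho / (2^j.+1)%:R.
Proof.
move=> M0; rewrite natrX !(exprS _ j) mulr2n.
set u : R := 2^+j.
have u0 : u != 0 by rewrite expf_neq0.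
rewrite exprMn (exprSr u k) !exprS.
have M0' : M != 0 by rewrite gt_eqF.
have h1 : u ^+ k != 0 by rewrite expf_neq0.
have h2 : (2:R) ^+ k != 0 by rewrite expf_neq0.
field; by rewrite u0 M0' h1.
Qed.

Theorem lemma2p2 (R : realType) (K : nat) (hK : (0 < K)%N) :
  exists C : R, forall (c d : R) (w : R -> R) (cs : 'I_K -> R) (rho : R),
    c < d ->
    (forall t, c < t -> t <= d -> 0 <= w t) ->
    (forall s t, c < s -> s <= t -> t <= d -> w s <= w t) ->
    0 < rho ->
    (\int[lebesgue_measure]_(t in Eset c d w cs rho) (w t)%:E <= (C * rho)%:E)%E.
Proof.
case: K hK => [//|k] _.
exists (k.+1%:R * 2^+k.+3) => c d w cs rho cd w0 wmon rho0.
set M := w d.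
have M0 : 0 <= M := w0 d cd (lexx d).
have wM t : c < t -> t <= d -> w t <= M := fun h1 h2 => wmon t d h1 h2 (lexx d).
have C0 : 0 <= k.+1%:R * (2:R)^+k.+3 * rho.
  by rewrite mulr_ge0 ?(ltW rho0) // mulr_ge0 // exprn_ge0.
have [M00|Mn0] := eqVneq M 0.
  rewrite integral0_eq ?lee_fin // => t [ct [td _]].
  by congr EFin; apply/le_anti; rewrite w0 // -M00 wM.
have Mp : 0 < M by rewrite lt_def Mn0 M0.
pose a j := M / (2^+j)^+k.+1.
pose r j := rho / M * (2^+j.+1)^+k.
pose B (j : nat) (l : 'I_k.+1) : set R := ball (cs l) (2 * r j).
pose f (j : nat) (t : R) : \bar R := (\sum_(l < k.+1) (a j * \1_(B j l) t)%:E)%E.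
have a0 j : 0 <= a j by rewrite /a divr_ge0 // exprn_ge0 // exprn_ge0.
have r0 j : 0 <= 2 * r j.
  by rewrite /r mulr_ge0 // mulr_ge0 ?exprn_ge0 // divr_ge0 // ltW.
have f0 j t : (0 <= f j t)%E.
  by apply: sume_ge0 => l _; rewrite lee_fin mulr_ge0.
have mf j : measurable_fun (setT : set R) (f j).
  apply: emeasurable_sum => l; apply/measurable_EFinP.
  apply: measurable_funM => //; apply: measurable_indic.
  exact: measurable_ball.
have Hpt : forall t, Eset c d w cs rho t -> ((w t)%:E <= \sum_(j <oo) f j t)%E.
  move=> t [ct [td Ht]].
  have S0 : (0 <= \sum_(j <oo) f j t)%E.
    by apply: nneseries_ge0 => n _ _; exact: f0.
  have [wt0|wtp] := leP (w t) 0.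
    by apply: le_trans S0; rewrite lee_fin.
  have [j [h1 h2]] := @level R k _ _ wtp (wM t ct td).
  have [l0 Bl0] : exists l, B j l t.
    apply: contrapT => /forallNP nB.
    have Hd l : 2 * r j <= `|t - cs l|.
      move: (nB l); rewrite /B -ball_normE /ball_ /= distrC => /negP.
      by rewrite -leNgt.
    have L1 : (a j.+1)^+k <= w t ^+ k.
      by apply: lerXn2r; rewrite ?nnegrE ?a0 ?(ltW wtp) // ltW.
    have L2 : \prod_(l < k.+1) (2 * r j) <= \prod_(l < k.+1) `|t - cs l|.
      by apply: ler_prod => l _; rewrite r0 Hd.
    rewrite prodr_const card_ord in L2.
    have L3 : (a j.+1)^+k * M * (2 * r j)^+k.+1 <= w t ^+ k * M * \prod_(l < k.+1) `|t - cs l|.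
      apply: ler_pM => //; first by rewrite mulr_ge0 // exprn_ge0.
      - by rewrite exprn_ge0.
      - by apply: ler_pM => //; rewrite exprn_ge0.
    have := le_trans L3 Ht.
    rewrite /a /r keyalg //.
    have e2 : (1:R) <= 2^+k by rewrite exprn_ege1 // ler1n.
    have rp : 0 < rho ^+ k.+1 by rewrite exprn_gt0.
    rewrite exprS; move: e2 rp; set X := rho ^+ k.+1; set Y := (2:R)^+k.
    move=> e2 rp hh; nra.
  apply: (@le_trans _ _ (f j t)).
    rewrite /f (bigD1 l0) //=.
    rewrite -[(w t)%:E]adde0; apply: leeD.
      by rewrite indicE mem_set // mulr1 lee_fin.
    by apply: sume_ge0 => l _; rewrite lee_fin mulr_ge0 // indicE; case: (_ \in _).
  apply: (le_trans _ (@nneseries_lim_ge R (fun j => f j t) xpredT 0 j.+1 (fun n _ _ => f0 n t))).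
  by rewrite big_nat_recr //= leeDr // sume_ge0 // => n _; exact: f0.
apply: (le_trans (@le_int_nomeas R _ setT _ (fun t => (\sum_(j <oo) f j t)%E) _ _ _)).
- move=> t [ct [td _]]; rewrite lee_fin; exact: w0.
- move=> t _; apply: nneseries_ge0 => n _ _; exact: f0.
- by move=> t Et; rewrite patch_setT; exact: Hpt.
rewrite integral_nneseries //.
have Hint j : (\int[lebesgue_measure]_(t in setT) f j t =
   ((k.+1%:R * 2^+k.+3 * rho) / (2^j.+1)%:R)%:E)%E.
  have Hl l : (\int[lebesgue_measure]_(t in setT) (a j * \1_(B j l) t)%:E
      = (a j * (2 * r j *+ 2))%:E)%E.
    under eq_integral do rewrite EFinM.
    have I0 : forall x : R, setT x -> (0 <= (\1_(B j l) x : R)%:E)%E.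
      by move=> x xT; rewrite lee_fin indicE; case: (_ \in _).
    have mI : measurable_fun setT (fun x => (\1_(B j l) x : R)%:E).
      by apply/measurable_EFinP; apply: measurable_indic; exact: measurable_ball.
    have E := ge0_integralZl_EFin lebesgue_measure (measurableT) I0 mI (a0 j).
    rewrite /= in E; rewrite E.
    rewrite integral_indic //; last exact: measurable_ball.
    rewrite setIT /B.
    transitivity ((a j)%:E * ((2 * r j) *+ 2)%:E)%E; last by rewrite EFinM.
    congr (_ * _)%E; exact: lebesgue_measure_ball.
  rewrite ge0_integral_sum //; last 2 first.
  - move=> l; apply/measurable_EFinP; apply: measurable_funM => //.
    by apply: measurable_indic; exact: measurable_ball.
  - by move=> l x _; rewrite lee_fin mulr_ge0 // indicE; case: (_ \in _).
  under eq_bigr do rewrite Hl.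
  rewrite sumEFin sumr_const card_ord /a /r.
  congr EFin; rewrite -(@termalg R k j M rho Mp) -mulr_natl mulr2n; ring.
rewrite (eq_eseriesr (fun j _ => Hint j)); exact: epsilon_trick0.
Qed.
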